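(* Let $q$ be a prime power and $L\in\mathbb{F}_q[x]$ a $q$-polynomial such that $L(x)/x$ is irreducible over $\mathbb{F}_q$. Then $L$ is not a $q^s$-polynomial for any integer $s>1$.
   Context: A $q$-polynomial is $\sum_{i=0}^n a_ix^{q^i}$; it is a $q^s$-polynomial if it has the form $\sum_{i=0}^m b_ix^{q^{is}}$, i.e. only exponents $q^j$ with $s\mid j$ occur. *)

(* Defs.v *)
From HB Require Import structures.
From mathcomp Require Import all_boot all_order all_algebra all_field.
Set Implicit Arguments. Unset Strict Implicit. Unset Printing Implicit Defensive.
Import GRing.Theory.
Local Open Scope ring_scope.

Definition is_qpoly (F : nzRingType) (q : nat) (L : {poly F}) : Prop :=
  forall j : nat, L`_j != 0 -> exists i : nat, j = (q ^ i)%N.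

Definition is_qspoly (F : nzRingType) (q s : nat) (L : {poly F}) : Prop :=
  forall j : nat, L`_j != 0 -> exists i : nat, j = (q ^ (i * s))%N.

(* Main.v *)
Require Import Defs.
From HB Require Import structures.
From mathcomp Require Import all_boot all_order all_algebra all_field.
From mathcomp Require abelian pgroup.
From mathcomp Require Import zify.
From Stdlib Require Import Lia.
Set Implicit Arguments. Unset Strict Implicit. Unset Printing Implicit Defensive.
Import GRing.Theory.
Local Open Scope ring_scope.

Lemma ineq (Q s : nat) : (1 < Q -> 1 < s -> s * (Q - 1) + 2 <= Q ^ s)%N.
Proof.
move=> Q1; elim: s => // s IH s1.
rewrite expnS.
case: (ltngtP 1 s) => [lt|gt|<-].
- have := IH lt; nia.
- lia.
- rewrite expn1; nia.
Qed.

Section Core.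
Variable F : finFieldType.
Variable h : {poly F}.
Hypothesis hI : monic_irreducible_poly h.
Local Notation E := {poly %/ h with hI}.
Local Notation q := #|F|.
Let alpha : E := in_qpoly h 'X.

Lemma frob_fix (c : F) k : c ^+ (q ^ k)%N = c.
Proof. by elim: k => [|k IH]; rewrite ?expr1 // expnSr exprM IH expf_card. Qed.

Lemma pnat_q k : [pchar E].-nat (q ^ k)%N.
Proof.
have [p pp cp] := finPcharP F.
have pq : p.-nat q.
  have := abelian.abelem_pgroup (abelian.fin_ring_pchar_abelem cp).
  by rewrite pgroup.pgroupE cardsT.
have cpE : p \in [pchar E] by rewrite (pchar_qpoly h).
rewrite (eq_pnat _ (pcharf_eq cpE)).
by rewrite pnatX pq.
Qed.

Lemma frobD k (x y : E) : (x + y) ^+ (q ^ k)%N = x ^+ (q ^ k)%N + y ^+ (q ^ k)%N.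
Proof. exact: exprDn_pchar (pnat_q k). Qed.

Lemma frobZ k c (x : E) : (c *: x) ^+ (q ^ k)%N = c *: x ^+ (q ^ k)%N.
Proof. by rewrite exprZn frob_fix. Qed.

Lemma frob_inj k (x y : E) : x ^+ (q ^ k)%N = y ^+ (q ^ k)%N -> x = y.
Proof.
move=> e; apply/eqP; rewrite -subr_eq0.
have : (x - y) ^+ (q ^ k)%N = 0.
  have := frobD k (x - y) y; rewrite subrK e.
  by move=> /(congr1 (fun z => z - y ^+ (q ^ k)%N)); rewrite addrK subrr.
by move/eqP; rewrite expf_eq0 => /andP[].
Qed.

Lemma frob0 k : (0 : E) ^+ (q ^ k)%N = 0.
Proof. by rewrite expr0n expn_eq0 (negbTE (lt0n_neq0 _)) // (leq_trans _ (finNzRing_gt1 F)). Qed.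

Lemma frob_sum k (I : Type) (r : seq I) (P : pred I) (G : I -> E) :
  (\sum_(i <- r | P i) G i) ^+ (q ^ k)%N = \sum_(i <- r | P i) (G i) ^+ (q ^ k)%N.
Proof. exact: (big_morph _ (frobD k) (frob0 k)). Qed.

Lemma in_qpoly_eval (p : {poly F}) :
  (in_qpoly h p : E) = \sum_(i < size p) p`_i *: alpha ^+ i.
Proof.
rewrite -[in LHS](coefK p) poly_def linear_sum /=.
by apply: eq_bigr => i _; rewrite in_qpolyZ rmorphXn.
Qed.

Lemma all_in_qpoly (e : E) : e = in_qpoly h (e : {poly F}).
Proof. by apply: val_inj; rewrite [RHS]in_qpoly_small // size_mk_monic. Qed.

Lemma fixall d : alpha ^+ (q ^ d)%N = alpha -> forall e : E, e ^+ (q ^ d)%N = e.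
Proof.
move=> ha e; rewrite [in RHS](all_in_qpoly e) in_qpoly_eval.
rewrite [in LHS](all_in_qpoly e) in_qpoly_eval frob_sum.
by apply: eq_bigr => i _; rewrite frobZ exprAC ha.
Qed.

Lemma card_le d : (0 < d)%N -> alpha ^+ (q ^ d)%N = alpha -> (#|E| <= q ^ d)%N.
Proof.
move=> d0 ha.
have q2 : (1 < q)%N := finNzRing_gt1 F.
have N2 : (1 < q ^ d)%N by rewrite -(expn0 q) ltn_exp2l.
pose P : {poly E} := 'X^(q ^ d)%N - 'X.
have sP : size P = (q ^ d)%N.+1.
  by rewrite /P size_polyDl ?size_polyXn // size_polyN size_polyX ltnS.
have P0 : P != 0 by rewrite -size_poly_eq0 sP.
have hall : all (root P) (enum E).
  by apply/allP => x _; rewrite /root /P !hornerE fixall // subrr.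
have := max_poly_roots P0 hall (enum_uniq _).
by rewrite sP ltnS -!cardE.
Qed.


Variables (m s : nat) (b : nat -> F).
Let beta j : E := alpha ^+ (q ^ (j * s)).
Let W : {vspace E} := <<mkseq beta m>>%VS.

Lemma frob_beta j : (beta j) ^+ (q ^ s)%N = beta j.+1.
Proof. by rewrite /beta -exprM -expnD mulSn addnC. Qed.

Lemma frob_span (v : E) : v \in W ->
  (forall i, (i < m)%N -> (beta i) ^+ (q ^ s)%N \in W) -> v ^+ (q ^ s)%N \in W.
Proof.
move=> vW hb; rewrite (coord_span vW) frob_sum.
apply: rpred_sum => i _; rewrite frobZ; apply: rpredZ.
have im : (i < m)%N by case: i.
rewrite (nth_map 0%N) ?size_iota // nth_iota // add0n; exact: hb.
Qed.

Lemma beta_in_W : (0 < m)%N -> b m != 0 ->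
  \sum_(j < m.+1) b j *: beta j = 0 -> forall j, beta j \in W.
Proof.
move=> m0 bm0 rel.
have inW i : (i < m)%N -> beta i \in W.
  by move=> im; apply: memv_span; rewrite -[beta i](nth_mkseq 0 beta im) mem_nth // size_mkseq.
have bmW : beta m \in W.
  move: rel; rewrite big_ord_recr /= => /eqP; rewrite addrC addr_eq0 => /eqP e.
  have -> : beta m = (b m)^-1 *: (b m *: beta m) by rewrite scalerA mulVf // scale1r.
  rewrite e; apply: rpredZ; rewrite rpredN; apply: rpred_sum => i _; apply/rpredZ/inW; exact: ltn_ord.
have hb i : (i < m)%N -> (beta i) ^+ (q ^ s)%N \in W.
  move=> im; rewrite frob_beta; case: (ltngtP i.+1 m) => [lt|gt|->] //; first exact: inW.
  by move: gt; rewrite ltnS leqNgt im.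
elim => [|j IH]; first exact: inW.
by rewrite -frob_beta; apply: frob_span.
Qed.


Lemma core_contra : (1 < s)%N -> (0 < m)%N -> b m != 0 ->
  \sum_(j < m.+1) b j *: beta j = 0 -> (size h).-1 = (q ^ (m * s)).-1 -> False.
Proof.
move=> s1 m0 bm0 rel hn.
set n := (size h).-1 in hn.
have cE : #|E| = (q ^ n)%N by rewrite card_qfpoly.
have q2 : (1 < q)%N := finNzRing_gt1 F.
have Qm : (1 < q ^ m)%N by rewrite -(expn0 q) ltn_exp2l.
have hineq := ineq Qm s1.
rewrite -expnM mulnC in hineq.
have n_big : ((q ^ m - 1) * s < n)%N by rewrite hn; lia.
have noFix d : (0 < d)%N -> (d < n)%N -> alpha ^+ (q ^ d)%N != alpha.
  move=> d0 dn; apply/negP => /eqP ha.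
  have := card_le d0 ha; rewrite cE leq_exp2l //; lia.
have a0 : alpha != 0.
  have n1 : (1 < n)%N by nia.
  by apply/negP => /eqP a0; move: (noFix 1%N isT n1); rewrite a0 frob0 eqxx.
have bnz j : beta j != 0 by rewrite expf_eq0 negb_and a0 orbT.
have bW := beta_in_W m0 bm0 rel.
have inj : injective (fun j : 'I_(q ^ m) => beta j).
  have key (a c : nat) : (a < c < q ^ m)%N -> beta a != beta c.
    move=> /andP[ac cq]; apply/negP => /eqP e.
    have : alpha ^+ (q ^ ((c - a) * s))%N = alpha.
      apply: (@frob_inj (a * s)); move: e; rewrite /beta -exprM -expnD.
      by rewrite -mulnDl subnK ?(ltnW ac).
    apply/eqP/noFix.
      by rewrite muln_gt0 subn_gt0 ac; lia.
    apply: leq_ltn_trans n_big; rewrite leq_mul2r; apply/orP; right; lia.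
  move=> a c /= e; apply/val_inj => /=.
  case: (ltngtP a c) => [lt|gt|//].
  - by move: (key a c); rewrite lt ltn_ord e eqxx => /(_ isT).
  - by move: (key c a); rewrite gt ltn_ord e eqxx => /(_ isT).
have sub : [set beta (val j) | j : 'I_(q ^ m)] \subset [set x | (x \in W) && (x != 0)].
  by apply/subsetP => x /imsetP [j _ ->]; rewrite inE bW bnz.
have := subset_leq_card sub.
rewrite card_imset // card_ord.
have cW : (#|W| <= q ^ m)%N.
  rewrite card_vspace leq_exp2l //; apply: leq_trans (dim_span _) _.
  by rewrite size_mkseq.
have : #|W| = (#|[set x | (x \in W) && (x != 0)]|).+1.
  rewrite (cardD1 0) rpred0 add1n; congr S; apply: eq_card => x.
  by rewrite !inE andbC.
move=> h1 h2; move: cW; by rewrite h1 ltnNge h2.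
Qed.

End Core.

Theorem theorem7p7 (F : finFieldType) (q : nat) (hq : #|F| = q)
  (L : {poly F}) (hL : is_qpoly q L)
  (hirr : irreducible_poly (L %/ 'X)) :
  forall s : nat, (1 < s)%N -> ~ is_qspoly q s L.
Proof.
move=> s s1 hqs; subst q.
have q2 : (1 < #|F|)%N := finNzRing_gt1 F.
set f := L %/ 'X in hirr.
have L0 : L`_0 = 0.
  apply/eqP; apply: contraT => nz; have [i e] := hL 0%N nz.
  by move: (expn_gt0 #|F| i); rewrite -e ltnn (ltnW q2).
have Lf : L = f * 'X.
  have dX : 'X %| L.
    by rewrite -['X]subr0 -polyC0 dvdp_XsubCl /root horner_coef0 L0.
  by rewrite /f divpK.
have f0 : f != 0 by apply: irredp_neq0.
have sL : size L = (size f).+1 by rewrite Lf size_mulX.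
have L0' : L != 0 by rewrite -size_poly_eq0 sL.
have [m hm] : exists m, (size L).-1 = (#|F| ^ (m * s))%N.
  apply: hqs; have := L0'; rewrite -lead_coef_eq0 /lead_coef.
  by [].
have sf : size f = (#|F| ^ (m * s))%N by rewrite -hm sL.
have m0 : (0 < m)%N.
  case: m hm sf => // _ sf; move: hirr.1; rewrite sf mul0n expn0 ltnn.
  by [].
pose h := (lead_coef f)^-1 *: f.
have lf0 : lead_coef f != 0 by rewrite lead_coef_eq0.
have sh : size h = size f by rewrite size_scale // invr_eq0.
have hI : monic_irreducible_poly h.
  split; last by rewrite monicE lead_coefZ mulVf.
  split; first by rewrite sh; exact: hirr.1.
  move=> d sd; rewrite dvdpZr ?invr_eq0 // => df.
  apply: eqp_trans (hirr d sd df) _.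
  by rewrite eqp_sym eqp_scale // invr_eq0.
pose b j := L`_(#|F| ^ (j * s)).
have bm0 : b m != 0.
  by rewrite /b -hm; have := L0'; rewrite -lead_coef_eq0 /lead_coef.
have Lsum : L = \sum_(j < m.+1) b j *: 'X^(#|F| ^ (j * s)).
  apply/polyP => i; rewrite coef_sum.
  under eq_bigr do rewrite coefZ coefXn.
  have [Li0|Linz] := eqVneq L`_i 0.
    rewrite Li0 big1 // => j _.
    by case: eqP => [e|_]; rewrite ?mulr0 // mulr1 /b -e.
  have [j0 ej0] := hqs i Linz.
  have j0m : (j0 < m.+1)%N.
    have : (i <= (size L).-1)%N.
      rewrite leqNgt; apply: contra Linz; rewrite sL /= => lt.
      by apply/eqP; apply: nth_default; rewrite sL.
    rewrite hm ej0 leq_exp2l // leq_mul2r; case/orP => [/eqP s0|]; last by [].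
    by rewrite s0 in s1.
  rewrite (bigD1 (Ordinal j0m)) //= big1 ?addr0.
    by rewrite ej0 eqxx mulr1.
  move=> j /negPf nj; rewrite ej0.
  case: eqP => [e|]; last by rewrite mulr0.
  have : j0 = j.
    have s0 : (0 < s)%N by lia.
    by apply/eqP; rewrite -(eqn_pmul2r s0) (expnI q2 e).
  by move=> ejj; move: nj; rewrite -val_eqE /= ejj eqxx.
pose alpha : {poly %/ h with hI} := in_qpoly h 'X.
have rel : \sum_(j < m.+1) b j *: alpha ^+ (#|F| ^ (j * s))%N = 0.
  have hh : (in_qpoly h h : {poly %/ h with hI}) = 0.
    apply: val_inj => /=; rewrite (mk_monicE hI).
    by apply: Pdiv.Ring.rmodpp; exact: mulrC.
  have fh : f = lead_coef f *: h by rewrite /h scalerA divff // scale1r.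
  have : (in_qpoly h L : {poly %/ h with hI}) = 0.
    by rewrite Lf rmorphM /= fh in_qpolyZ hh scaler0 mul0r.
  rewrite [in X in X -> _]Lsum linear_sum /= => e; apply: etrans _ e.
  by apply: eq_bigr => j _; rewrite in_qpolyZ rmorphXn.
apply: (@core_contra F h hI m s b s1 m0 bm0 rel).
by rewrite sh sf.
Qed.
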